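(* The Veech homomorphism $V\colon \mathrm{Aff}(S_E)\to GL(2,\mathbb R)$, $\Psi\mapsto D\Psi$, is injective. Moreover, $\mathrm{Aff}(S_E)$ is generated by the three affine automorphisms $\Psi_\alpha,\Psi_\beta,\Psi_\gamma$ whose derivatives are $$\alpha=\begin{pmatrix}1&0\\0&-1\end{pmatrix},\qquad \beta=\begin{pmatrix}\tfrac12&\tfrac{\sqrt3}{2}\\ \tfrac{\sqrt3}{2}&-\tfrac12\end{pmatrix},\qquad \gamma=\begin{pmatrix}-1&2\sqrt3\\0&1\end{pmatrix}.$$ Consequently the Veech group $V(S_E)$ is generated by $\alpha,\beta,\gamma$.
   Context: Let $E$ be the regular hexagon of side length $1$, centred at the origin, with two horizontal sides. Gluing each pair of opposite parallel sides by the translation identifying them gives a translation surface $S_E$: a flat torus carrying two marked points, namely the two equivalence classes of vertices of $E$; let $\Sigma$ denote the set of these two marked points. An affine automorphism of $S_E$ is a homeomorphism $\Psi\colon S_E\to S_E$ such that: - $\Psi(\Sigma)=\Sigma$; - on $S_E\setminus\Sigma$, $\Psi$ is a diffeomorphism whose derivative, computed in the translation charts, is a constant matrix $D\Psi\in GL(2,\mathbb R)$. Orientation-reversing affine automorphisms are allowed. They form a group $\mathrm{Aff}(S_E)$. The Veech group $V(S_E)$ is the image of $\mathrm{Aff}(S_E)$ under $\Psi\mapsto D\Psi$; it is contained in the group of real $2\times 2$ matrices of determinant $\pm1$. *)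

(* Defs.v *)
From Stdlib Require Import Reals ZArith List.
Open Scope R_scope.

Definition pt : Type := (R * R)%type.
Definition padd (u v : pt) : pt := (fst u + fst v, snd u + snd v).
Definition psub (u v : pt) : pt := (fst u - fst v, snd u - snd v).
Definition pscale (k : R) (u : pt) : pt := (k * fst u, k * snd u).
Definition pnorm (u : pt) : R := sqrt (fst u ^ 2 + snd u ^ 2).

Record mat2 : Type := Mat2 { m11 : R; m12 : R; m21 : R; m22 : R }.
Definition mat_apply (A : mat2) (u : pt) : pt :=
  (m11 A * fst u + m12 A * snd u, m21 A * fst u + m22 A * snd u).
Definition mat_mul (A B : mat2) : mat2 :=
  Mat2 (m11 A * m11 B + m12 A * m21 B) (m11 A * m12 B + m12 A * m22 B)
       (m21 A * m11 B + m22 A * m21 B) (m21 A * m12 B + m22 A * m22 B).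
Definition mat_id : mat2 := Mat2 1 0 0 1.
Definition mat_det (A : mat2) : R := m11 A * m22 A - m12 A * m21 A.

Definition hex_vertices : list pt :=
  (1, 0) :: (1/2, sqrt 3 / 2) :: (-1/2, sqrt 3 / 2) :: (-1, 0)
  :: (-1/2, - (sqrt 3 / 2)) :: (1/2, - (sqrt 3 / 2)) :: nil.

(** Translations identifying the three pairs of opposite parallel sides. *)
Definition glue1 : pt := (0, sqrt 3).
Definition glue2 : pt := (3/2, sqrt 3 / 2).
Definition glue3 : pt := (3/2, - (sqrt 3 / 2)).

Definition in_lattice (v : pt) : Prop :=
  exists a b c : Z,
    v = padd (pscale (IZR a) glue1) (padd (pscale (IZR b) glue2) (pscale (IZR c) glue3)).

(** S_E = E / gluing = R^2 / Lambda; points of S_E are represented by points of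
    R^2, and two representatives give the same point of S_E iff [equiv]. *)
Definition equiv (x y : pt) : Prop := in_lattice (psub x y).

Definition is_marked (x : pt) : Prop := exists w, In w hex_vertices /\ equiv x w.

Definition respects (F : pt -> pt) : Prop := forall x y, equiv x y -> equiv (F x) (F y).

Definition map_eq (F G : pt -> pt) : Prop := forall x, equiv (F x) (G x).

Definition near (u v : pt) (eps : R) : Prop :=
  exists l, in_lattice l /\ pnorm (psub (psub u v) l) < eps.

(** Continuity of a map of S_E (quotient topology = flat metric topology). *)
Definition quot_continuous (F : pt -> pt) : Prop :=
  forall x eps, 0 < eps -> exists delta, 0 < delta /\
    forall y, pnorm (psub y x) < delta -> near (F y) (F x) eps.

Definition is_homeo (F : pt -> pt) : Prop :=
  respects F /\ quot_continuous F /\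
  exists G, respects G /\ quot_continuous G /\
    map_eq (fun x => G (F x)) (fun x => x) /\ map_eq (fun x => F (G x)) (fun x => x).

(** In translation charts around any non-marked point, F is affine with linear
    part A, i.e. F is smooth there with constant derivative A. *)
Definition locally_affine_off_marked (F : pt -> pt) (A : mat2) : Prop :=
  forall x, ~ is_marked x ->
    exists delta c, 0 < delta /\
      forall y, pnorm (psub y x) < delta -> equiv (F y) (padd (mat_apply A y) c).

Definition is_affine_aut (F : pt -> pt) (A : mat2) : Prop :=
  is_homeo F /\
  (forall x, is_marked (F x) <-> is_marked x) /\
  mat_det A <> 0 /\
  locally_affine_off_marked F A.

Inductive aff_gen (f1 f2 f3 : pt -> pt) : (pt -> pt) -> Prop :=
| ag_1 : aff_gen f1 f2 f3 f1
| ag_2 : aff_gen f1 f2 f3 f2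
| ag_3 : aff_gen f1 f2 f3 f3
| ag_id : aff_gen f1 f2 f3 (fun x => x)
| ag_comp : forall f g, aff_gen f1 f2 f3 f -> aff_gen f1 f2 f3 g ->
    aff_gen f1 f2 f3 (fun x => f (g x))
| ag_inv : forall f g, aff_gen f1 f2 f3 f ->
    map_eq (fun x => g (f x)) (fun x => x) -> map_eq (fun x => f (g x)) (fun x => x) ->
    aff_gen f1 f2 f3 g
| ag_eq : forall f g, aff_gen f1 f2 f3 f -> map_eq f g -> aff_gen f1 f2 f3 g.

Inductive mat_gen (A1 A2 A3 : mat2) : mat2 -> Prop :=
| mg_1 : mat_gen A1 A2 A3 A1
| mg_2 : mat_gen A1 A2 A3 A2
| mg_3 : mat_gen A1 A2 A3 A3
| mg_id : mat_gen A1 A2 A3 mat_id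
| mg_mul : forall A B, mat_gen A1 A2 A3 A -> mat_gen A1 A2 A3 B ->
    mat_gen A1 A2 A3 (mat_mul A B)
| mg_inv : forall A B, mat_gen A1 A2 A3 A ->
    mat_mul A B = mat_id -> mat_mul B A = mat_id -> mat_gen A1 A2 A3 B.

Definition alpha : mat2 := Mat2 1 0 0 (-1).
Definition beta : mat2 := Mat2 (1/2) (sqrt 3 / 2) (sqrt 3 / 2) (-1/2).
Definition gamma : mat2 := Mat2 (-1) (2 * sqrt 3) 0 1.

(* Main.v *)
From Stdlib Require Import Reals Lra Lia Psatz ZArith Nsatz Classical.
Require Import Defs.
Open Scope R_scope.

Notation s3 := (sqrt 3).
Lemma s3sq : s3 * s3 = 3.
Proof. apply sqrt_sqrt; lra. Qed.
Lemma s3pos : 0 < s3.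
Proof. apply sqrt_lt_R0; lra. Qed.
Lemma s3lt2 : s3 < 2.
Proof. pose proof s3sq; pose proof s3pos; nra. Qed.

Ltac clear_noneq := repeat match goal with H : ?T |- _ =>
  lazymatch type of T with Prop => lazymatch T with @eq R _ _ => fail | _ => clear H end end end.

Ltac s3tac :=
  clear_noneq; unfold Rdiv in *;
  let h2 := fresh "h2" in let h3 := fresh "h3" in let h6 := fresh "h6" in
  let h4 := fresh "h4" in let hs := fresh "hs" in
  assert (h2 : 2 * /2 = 1) by field;
  assert (h3 : 3 * /3 = 1) by field;
  assert (h4 : 4 * /4 = 1) by field;
  assert (h6 : 6 * /6 = 1) by field;
  pose proof s3sq as hs;
  generalize dependent (/2); generalize dependent (/3);
  generalize dependent (/4); generalize dependent (/6);
  generalize dependent (sqrt 3); intros; nsatz.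

Ltac zmod3 :=
  repeat match goal with
  | |- context [ (?x mod 3)%Z ] =>
      pose proof (Z.div_mod x 3 ltac:(lia)); pose proof (Z.mod_pos_bound x 3 ltac:(lia));
      generalize dependent (x mod 3)%Z; generalize dependent (x / 3)%Z; intros
  | |- context [ (?x / 3)%Z ] =>
      pose proof (Z.div_mod x 3 ltac:(lia)); pose proof (Z.mod_pos_bound x 3 ltac:(lia));
      generalize dependent (x mod 3)%Z; generalize dependent (x / 3)%Z; intros
  | H : context [ (?x mod 3)%Z ] |- _ =>
      pose proof (Z.div_mod x 3 ltac:(lia)); pose proof (Z.mod_pos_bound x 3 ltac:(lia));
      generalize dependent (x mod 3)%Z; generalize dependent (x / 3)%Z; intros
  end; lia.

Definition cs (v : pt) : R := fst v / 3 + snd v * s3 / 3.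
Definition ct (v : pt) : R := fst v / 3 - snd v * s3 / 3.
Definition isZ (r : R) : Prop := exists m : Z, r = IZR m.

Lemma isZ_add r1 r2 : isZ r1 -> isZ r2 -> isZ (r1 + r2).
Proof. intros [a ->] [b ->]. exists (a+b)%Z. now rewrite plus_IZR. Qed.
Lemma isZ_opp r1 : isZ r1 -> isZ (- r1).
Proof. intros [a ->]. exists (-a)%Z. now rewrite opp_IZR. Qed.
Lemma isZ_sub r1 r2 : isZ r1 -> isZ r2 -> isZ (r1 - r2).
Proof. intros; unfold Rminus; apply isZ_add; auto; apply isZ_opp; auto. Qed.
Lemma isZ_0 : isZ 0.
Proof. exists 0%Z; reflexivity. Qed.
Lemma isZ_mulZ z r : isZ r -> isZ (IZR z * r).
Proof. intros [a ->]. exists (z*a)%Z. now rewrite mult_IZR. Qed.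
Lemma isZ_ext r1 r2 : r1 = r2 -> isZ r1 -> isZ r2.
Proof. intros ->; auto. Qed.

Lemma v_recon v : v = (3/2 * (cs v + ct v), s3/2 * (cs v - ct v)).
Proof. destruct v as [x y]; unfold cs, ct; simpl; f_equal; s3tac. Qed.

Lemma coords_inj u v : cs u = cs v -> ct u = ct v -> u = v.
Proof. intros H1 H2. rewrite (v_recon u), (v_recon v), H1, H2. reflexivity. Qed.

Lemma lat_iff v : in_lattice v <-> isZ (cs v) /\ isZ (ct v).
Proof.
  split.
  - intros (a & b & c & ->). split.
    + exists (a+b)%Z. rewrite plus_IZR. unfold cs, padd, pscale, glue1, glue2, glue3; simpl. s3tac.
    + exists (c-a)%Z. rewrite minus_IZR. unfold ct, padd, pscale, glue1, glue2, glue3; simpl. s3tac.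
  - intros [[m Hm] [n Hn]]. exists 0%Z, m, n.
    destruct v as [x y]; unfold cs, ct in *; simpl in *.
    unfold padd, pscale, glue1, glue2, glue3; simpl. change (IZR 0) with 0. f_equal; s3tac.
Qed.

Lemma cs_sub u v : cs (psub u v) = cs u - cs v.
Proof. unfold cs, psub; simpl; field. Qed.
Lemma ct_sub u v : ct (psub u v) = ct u - ct v.
Proof. unfold ct, psub; simpl; field. Qed.
Lemma cs_add u v : cs (padd u v) = cs u + cs v.
Proof. unfold cs, padd; simpl; field. Qed.
Lemma ct_add u v : ct (padd u v) = ct u + ct v.
Proof. unfold ct, padd; simpl; field. Qed.

Lemma equiv_iff u v : equiv u v <-> isZ (cs u - cs v) /\ isZ (ct u - ct v).
Proof. unfold equiv. rewrite lat_iff, cs_sub, ct_sub. tauto. Qed.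

Lemma equiv_refl u : equiv u u.
Proof. apply equiv_iff. split; apply (isZ_ext 0); try ring; apply isZ_0. Qed.
Lemma equiv_sym u v : equiv u v -> equiv v u.
Proof. rewrite !equiv_iff. intros [H1 H2]; split; [apply (isZ_ext (-(cs u - cs v)))|apply (isZ_ext (-(ct u - ct v)))]; try ring; apply isZ_opp; auto. Qed.
Lemma equiv_trans u v w : equiv u v -> equiv v w -> equiv u w.
Proof. rewrite !equiv_iff. intros [H1 H2] [H3 H4]; split;
  [apply (isZ_ext ((cs u - cs v) + (cs v - cs w)))|apply (isZ_ext ((ct u - ct v) + (ct v - ct w)))]; try ring; apply isZ_add; auto. Qed.

Lemma pnorm_pos v : 0 <= pnorm v.
Proof. unfold pnorm; apply sqrt_pos. Qed.

Lemma pnorm_sq v : pnorm v * pnorm v = fst v ^ 2 + snd v ^ 2.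
Proof. unfold pnorm; apply sqrt_sqrt; nra. Qed.

Lemma abs_fst_le v : Rabs (fst v) <= pnorm v.
Proof.
  rewrite <- sqrt_Rsqr_abs. unfold pnorm; apply sqrt_le_1_alt. unfold Rsqr; nra.
Qed.
Lemma abs_snd_le v : Rabs (snd v) <= pnorm v.
Proof.
  rewrite <- sqrt_Rsqr_abs. unfold pnorm; apply sqrt_le_1_alt. unfold Rsqr; nra.
Qed.
Lemma pnorm_le_sum v : pnorm v <= Rabs (fst v) + Rabs (snd v).
Proof.
  pose proof (Rabs_pos (fst v)); pose proof (Rabs_pos (snd v)).
  rewrite <- (sqrt_Rsqr (Rabs (fst v) + Rabs (snd v))) by lra.
  unfold pnorm; apply sqrt_le_1_alt.
  replace (fst v ^ 2) with (Rabs (fst v) * Rabs (fst v)) by (rewrite <- Rabs_mult; rewrite Rabs_pos_eq; [ring| nra]).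
  replace (snd v ^ 2) with (Rabs (snd v) * Rabs (snd v)) by (rewrite <- Rabs_mult; rewrite Rabs_pos_eq; [ring| nra]).
  unfold Rsqr; nra.
Qed.
Lemma pnorm_ext u v : fst u = fst v -> snd u = snd v -> pnorm u = pnorm v.
Proof. intros; unfold pnorm; rewrite H, H0; reflexivity. Qed.

Lemma pnorm_scale k u1 u2 : pnorm (k * u1, k * u2) = Rabs k * pnorm (u1, u2).
Proof.
  unfold pnorm; cbn [fst snd].
  replace ((k * u1) ^ 2 + (k * u2) ^ 2) with (Rsqr k * (u1 ^ 2 + u2 ^ 2)) by (unfold Rsqr; ring).
  rewrite sqrt_mult_alt by apply Rle_0_sqr. rewrite sqrt_Rsqr_abs. reflexivity.
Qed.

Lemma cs_le v : Rabs (cs v) <= pnorm v.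
Proof.
  unfold cs. pose proof (abs_fst_le v); pose proof (abs_snd_le v).
  pose proof s3pos; pose proof s3lt2.
  eapply Rle_trans. apply Rabs_triang.
  replace (fst v / 3) with (fst v * (1/3)) by field.
  replace (snd v * s3 / 3) with (snd v * (s3/3)) by field.
  rewrite !Rabs_mult. rewrite (Rabs_pos_eq (1/3)) by lra. rewrite (Rabs_pos_eq (s3/3)) by lra.
  pose proof (Rabs_pos (fst v)); pose proof (Rabs_pos (snd v)). nra.
Qed.
Lemma ct_le v : Rabs (ct v) <= pnorm v.
Proof.
  unfold ct. pose proof (abs_fst_le v); pose proof (abs_snd_le v).
  pose proof s3pos; pose proof s3lt2.
  unfold Rminus. eapply Rle_trans. apply Rabs_triang. rewrite Rabs_Ropp.
  replace (fst v / 3) with (fst v * (1/3)) by field.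
  replace (snd v * s3 / 3) with (snd v * (s3/3)) by field.
  rewrite !Rabs_mult. rewrite (Rabs_pos_eq (1/3)) by lra. rewrite (Rabs_pos_eq (s3/3)) by lra.
  pose proof (Rabs_pos (fst v)); pose proof (Rabs_pos (snd v)). nra.
Qed.

Lemma sq_norm_coords v : fst v ^ 2 + snd v ^ 2 = 3 * (cs v ^ 2 + cs v * ct v + ct v ^ 2).
Proof. destruct v as [x y]; unfold cs, ct; simpl; s3tac. Qed.

Definition nearc (u v : pt) (e : R) : Prop :=
  exists m n : Z, Rabs (cs u - cs v - IZR m) < e /\ Rabs (ct u - ct v - IZR n) < e.

Lemma near_nearc u v e : near u v e -> nearc u v e.
Proof.
  intros (l & Hl & Hn). apply lat_iff in Hl. destruct Hl as [[m Hm] [n Hn']].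
  exists m, n. split.
  - rewrite <- Hm, <- cs_sub, <- cs_sub. eapply Rle_lt_trans; [apply cs_le|]; auto.
  - rewrite <- Hn', <- ct_sub, <- ct_sub. eapply Rle_lt_trans; [apply ct_le|]; auto.
Qed.

Lemma IZR_small z : Rabs (IZR z) < 1 -> z = 0%Z.
Proof.
  intros H. apply Rabs_def2 in H. destruct H.
  assert (-1 < z)%Z by (apply lt_IZR; simpl; lra).
  assert (z < 1)%Z by (apply lt_IZR; simpl; lra). lia.
Qed.

Lemma lim_eq0 r : (forall e, 0 < e -> Rabs r < e) -> r = 0.
Proof.
  intros H. destruct (Req_dec r 0) as [|Hr]; auto.
  assert (0 < Rabs r) by (apply Rabs_pos_lt; auto).
  specialize (H _ H0). lra.
Qed.

Lemma abs_diff_lt a b e1 e2 : Rabs a < e1 -> Rabs b < e2 -> Rabs (a - b) < e1 + e2.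
Proof.
  intros. unfold Rminus. eapply Rle_lt_trans. apply Rabs_triang. rewrite Rabs_Ropp. lra.
Qed.

Lemma lim_isZ r : (forall e, 0 < e -> exists m : Z, Rabs (r - IZR m) < e) -> isZ r.
Proof.
  intros H. destruct (H (1/2)) as [m0 Hm0]; [lra|].
  exists m0. apply Rminus_diag_uniq. apply lim_eq0. intros e He.
  destruct (H (Rmin e (1/2))) as [m Hm]. { apply Rmin_pos; lra. }
  assert (m = m0).
  { assert (Rabs (IZR (m - m0)) < 1).
    { rewrite minus_IZR. replace (IZR m - IZR m0) with ((r - IZR m0) - (r - IZR m)) by ring.
      pose proof (Rmin_r e (1/2)).
      pose proof (abs_diff_lt _ _ _ _ Hm0 Hm). lra. }
    apply IZR_small in H0. lia. }
  subst. eapply Rlt_le_trans; eauto. apply Rmin_l.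
Qed.

Lemma nearc_lim u v : (forall e, 0 < e -> nearc u v e) -> equiv u v.
Proof.
  intros H. apply equiv_iff. split; apply lim_isZ; intros e He;
  destruct (H e He) as (m & n & H1 & H2); eauto.
Qed.

Ltac negIZR := repeat match goal with |- context [IZR (Zneg ?p)] => change (IZR (Zneg p)) with (- IZR (Zpos p)) end.

Definition markc (x : pt) : Prop :=
  exists m n : Z, 3 * cs x = IZR m /\ 3 * ct x = IZR n /\
    ((m - n) mod 3 = 0)%Z /\ (m mod 3 <> 0)%Z.

Lemma mark_of_vertex x w mw nw :
  3 * cs w = IZR mw -> 3 * ct w = IZR nw -> ((mw - nw) mod 3 = 0)%Z -> (mw mod 3 <> 0)%Z ->
  equiv x w -> markc x.
Proof.
  intros H1 H2 H3 H4 He. apply equiv_iff in He. destruct He as [[i Hi] [j Hj]].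
  exists (3*i + mw)%Z, (3*j + nw)%Z. repeat split.
  - rewrite plus_IZR, mult_IZR, <- H1, <- Hi. simpl. lra.
  - rewrite plus_IZR, mult_IZR, <- H2, <- Hj. simpl. lra.
  - zmod3.
  - zmod3.
Qed.

Lemma marked_markc x : is_marked x -> markc x.
Proof.
  intros (w & Hin & He). simpl in Hin.
  destruct Hin as [<-|[<-|[<-|[<-|[<-|[<-|[]]]]]]].
  - refine (mark_of_vertex x _ 1 1 _ _ _ _ He); unfold cs, ct; cbn [fst snd]; try (negIZR; s3tac); try (vm_compute; congruence).
  - refine (mark_of_vertex x _ 2 (-1) _ _ _ _ He); unfold cs, ct; cbn [fst snd]; try (negIZR; s3tac); try (vm_compute; congruence).
  - refine (mark_of_vertex x _ 1 (-2) _ _ _ _ He); unfold cs, ct; cbn [fst snd]; try (negIZR; s3tac); try (vm_compute; congruence).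
  - refine (mark_of_vertex x _ (-1) (-1) _ _ _ _ He); unfold cs, ct; cbn [fst snd]; try (negIZR; s3tac); try (vm_compute; congruence).
  - refine (mark_of_vertex x _ (-2) 1 _ _ _ _ He); unfold cs, ct; cbn [fst snd]; try (negIZR; s3tac); try (vm_compute; congruence).
  - refine (mark_of_vertex x _ (-1) 2 _ _ _ _ He); unfold cs, ct; cbn [fst snd]; try (negIZR; s3tac); try (vm_compute; congruence).
Qed.

Lemma markc_marked x : markc x -> is_marked x.
Proof.
  intros (m & n & Hm & Hn & H1 & H2).
  assert (Hc : (m mod 3 = 1 \/ m mod 3 = 2)%Z) by (pose proof (Z.mod_pos_bound m 3); lia).
  destruct Hc as [Hc|Hc].
  - exists (1, 0). split. { simpl; tauto. }
    apply equiv_iff; split.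
    + exists (m / 3)%Z. assert (IZR m = 3 * IZR (m/3) + 1).
      { rewrite <- mult_IZR. change 1 with (IZR 1). rewrite <- plus_IZR. f_equal.
        zmod3. }
      unfold cs at 2; cbn [fst snd]. lra.
    + exists (n / 3)%Z. assert (IZR n = 3 * IZR (n/3) + 1).
      { rewrite <- mult_IZR. change 1 with (IZR 1). rewrite <- plus_IZR. f_equal.
        zmod3. }
      unfold ct at 2; cbn [fst snd]. lra.
  - exists (-1, 0). split. { simpl; tauto. }
    apply equiv_iff; split.
    + exists (m / 3 + 1)%Z. assert (IZR m = 3 * IZR (m/3 + 1) - 1).
      { rewrite <- mult_IZR. change 1 with (IZR 1). rewrite <- minus_IZR. f_equal.
        zmod3. }
      unfold cs at 2; cbn [fst snd]. lra.
    + exists (n / 3 + 1)%Z. assert (IZR n = 3 * IZR (n/3 + 1) - 1).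
      { rewrite <- mult_IZR. change 1 with (IZR 1). rewrite <- minus_IZR. f_equal.
        zmod3. }
      unfold ct at 2; cbn [fst snd]. lra.
Qed.

Lemma marked_iff x : is_marked x <-> markc x.
Proof. split; [apply marked_markc|apply markc_marked]. Qed.

Lemma marked_equiv x y : equiv x y -> is_marked x -> is_marked y.
Proof.
  intros He (w & Hw & Hxw). exists w; split; auto.
  eapply equiv_trans; [apply equiv_sym; eauto|auto].
Qed.

(** * Integer matrices (lattice coordinates) *)
Record zmat := ZM { za : Z; zb : Z; zc : Z; zd : Z }.
Definition zmul (M N : zmat) : zmat :=
  ZM (za M * za N + zb M * zc N)%Z (za M * zb N + zb M * zd N)%Z
     (zc M * za N + zd M * zc N)%Z (zc M * zb N + zd M * zd N)%Z.
Definition zdet (M : zmat) : Z := (za M * zd M - zb M * zc M)%Z.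
Definition zI : zmat := ZM 1 0 0 1.

Definition toRr (a b c d : R) : mat2 :=
  Mat2 ((a+b+c+d)/2) (s3/2*(a+c-b-d)) (s3/6*(a-c+b-d)) ((a-c-b+d)/2).
Definition toR (M : zmat) : mat2 := toRr (IZR (za M)) (IZR (zb M)) (IZR (zc M)) (IZR (zd M)).

Ltac izr := rewrite ?plus_IZR, ?minus_IZR, ?mult_IZR, ?opp_IZR.

Lemma toR_mul M N : toR (zmul M N) = mat_mul (toR M) (toR N).
Proof.
  destruct M as [a b c d], N as [a' b' c' d']. unfold toR, toRr, zmul, mat_mul; cbn.
  izr. f_equal; s3tac.
Qed.

Lemma toR_I : toR zI = mat_id.
Proof. unfold toR, toRr, zI, mat_id; cbn. f_equal; s3tac. Qed.

Lemma det_toR M : mat_det (toR M) = IZR (zdet M).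
Proof. destruct M as [a b c d]. unfold toR, toRr, zdet, mat_det; cbn. izr. s3tac. Qed.

Lemma cs_toR M v : cs (mat_apply (toR M) v) = IZR (za M) * cs v + IZR (zb M) * ct v.
Proof. destruct M as [a b c d], v as [x y]. unfold toR, toRr, cs, ct, mat_apply; cbn. s3tac. Qed.
Lemma ct_toR M v : ct (mat_apply (toR M) v) = IZR (zc M) * cs v + IZR (zd M) * ct v.
Proof. destruct M as [a b c d], v as [x y]. unfold toR, toRr, cs, ct, mat_apply; cbn. s3tac. Qed.

Lemma mat_basis A :
  A = toRr (cs (mat_apply A glue2)) (cs (mat_apply A glue3)) (ct (mat_apply A glue2)) (ct (mat_apply A glue3)).
Proof. destruct A as [p q r s]. unfold toRr, cs, ct, mat_apply, glue2, glue3; cbn. f_equal; s3tac. Qed.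

Lemma mat_assoc A B C : mat_mul A (mat_mul B C) = mat_mul (mat_mul A B) C.
Proof. destruct A, B, C; unfold mat_mul; cbn; f_equal; ring. Qed.
Lemma mat_id_l A : mat_mul mat_id A = A.
Proof. destruct A; unfold mat_mul, mat_id; cbn; f_equal; ring. Qed.
Lemma mat_id_r A : mat_mul A mat_id = A.
Proof. destruct A; unfold mat_mul, mat_id; cbn; f_equal; ring. Qed.
Lemma mat_apply_mul A B v : mat_apply (mat_mul A B) v = mat_apply A (mat_apply B v).
Proof. destruct A, B, v; unfold mat_mul, mat_apply; cbn; f_equal; ring. Qed.
Lemma mat_apply_id v : mat_apply mat_id v = v.
Proof. destruct v; unfold mat_apply, mat_id; cbn; f_equal; ring. Qed.

Definition zX : zmat := ZM 0 1 1 0.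
Definition zY : zmat := ZM 1 1 0 (-1).
Definition zZ : zmat := ZM 1 (-2) 0 (-1).

Lemma toR_X : toR zX = alpha.
Proof. unfold toR, toRr, zX, alpha; cbn. f_equal; negIZR; s3tac. Qed.
Lemma toR_Y : toR zY = beta.
Proof. unfold toR, toRr, zY, beta; cbn. f_equal; negIZR; s3tac. Qed.
Lemma toR_Z : toR zZ = gamma.
Proof. unfold toR, toRr, zZ, gamma; cbn. f_equal; negIZR; s3tac. Qed.

Definition Gm (M : zmat) : Prop :=
  (zdet M = 1 \/ zdet M = -1)%Z /\
  exists e k l : Z, (e = 1 \/ e = -1)%Z /\ (za M + zb M = e + 3*k)%Z /\ (zc M + zd M = e + 3*l)%Z.

Lemma zdet_mul M N : zdet (zmul M N) = (zdet M * zdet N)%Z.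
Proof. destruct M, N; unfold zdet, zmul; cbn [za zb zc zd]; ring. Qed.

Lemma Gm_mul M N : Gm M -> Gm N -> Gm (zmul M N).
Proof.
  destruct M as [a b c d], N as [a' b' c' d']. unfold Gm; cbn [za zb zc zd].
  intros [HdM (e & k & l & He & H1 & H2)] [HdN (e' & k' & l' & He' & H1' & H2')].
  split.
  - rewrite zdet_mul; cbn [za zb zc zd]. destruct HdM as [-> | ->], HdN as [-> | ->]; lia.
  - exists (e * e')%Z, (e' * k + a * k' + b * l')%Z, (e' * l + c * k' + d * l')%Z.
    split; [destruct He as [-> | ->], He' as [-> | ->]; lia|].
    assert (b' = e' + 3*k' - a')%Z by lia. subst b'.
    assert (d' = e' + 3*l' - c')%Z by lia. subst d'.
    assert (b = e + 3*k - a)%Z by lia. subst b.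
    assert (d = e + 3*l - c)%Z by lia. subst d.
    unfold zmul; cbn [za zb zc zd]. split; ring.
Qed.

Definition zinv (M : zmat) : zmat :=
  ZM (zdet M * zd M) (- (zdet M * zb M)) (- (zdet M * zc M)) (zdet M * za M).

Lemma zinv_r M : (zdet M = 1 \/ zdet M = -1)%Z -> zmul M (zinv M) = zI.
Proof.
  destruct M as [a b c d]; unfold zinv, zdet, zmul, zI; cbn [za zb zc zd]. intros H.
  destruct H as [H|H]; rewrite H; f_equal; lia.
Qed.
Lemma zinv_l M : (zdet M = 1 \/ zdet M = -1)%Z -> zmul (zinv M) M = zI.
Proof.
  destruct M as [a b c d]; unfold zinv, zdet, zmul, zI; cbn [za zb zc zd]. intros H.
  destruct H as [H|H]; rewrite H; f_equal; lia.
Qed.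

Lemma Gm_inv M : Gm M -> Gm (zinv M).
Proof.
  destruct M as [a b c d]. unfold Gm, zinv, zdet; cbn [za zb zc zd].
  intros [Hd (e & k & l & He & H1 & H2)].
  assert (a = e + 3*k - b)%Z by lia. subst a.
  assert (c = e + 3*l - d)%Z by lia. subst c.
  set (D := ((e + 3 * k - b) * d - b * (e + 3 * l - d))%Z) in *.
  assert (HD' : (D = e * (d - b) + 3 * (k*d - b*l))%Z) by (unfold D; ring).
  clearbody D.
  split.
  - destruct Hd as [-> | ->]; nia.
  - exists e, (- e * (k*d - b*l) * D)%Z, (- e * (k*d - b*l) * D + D * (k - l))%Z.
    split; auto.
    destruct Hd as [-> | ->]; destruct He as [-> | ->]; split; nia.
Qed.

Definition inH (M : zmat) : Prop := mat_gen alpha beta gamma (toR M).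

Lemma inH_mul M N : inH M -> inH N -> inH (zmul M N).
Proof. unfold inH; rewrite toR_mul; apply mg_mul. Qed.
Lemma inH_X : inH zX. Proof. unfold inH; rewrite toR_X; apply mg_1. Qed.
Lemma inH_Y : inH zY. Proof. unfold inH; rewrite toR_Y; apply mg_2. Qed.
Lemma inH_Z : inH zZ. Proof. unfold inH; rewrite toR_Z; apply mg_3. Qed.
Lemma inH_I : inH zI. Proof. unfold inH; rewrite toR_I; apply mg_id. Qed.

Lemma zmul_assoc M N P : zmul M (zmul N P) = zmul (zmul M N) P.
Proof. destruct M, N, P; unfold zmul; cbn [za zb zc zd]; f_equal; ring. Qed.
Lemma zmul_I_l M : zmul zI M = M.
Proof. destruct M; unfold zmul, zI; cbn [za zb zc zd]; f_equal; ring. Qed.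

Lemma step_by h hi M : inH hi -> zmul hi h = zI -> inH (zmul h M) -> inH M.
Proof.
  intros H1 H2 H3. replace M with (zmul hi (zmul h M)).
  - apply inH_mul; auto.
  - rewrite zmul_assoc, H2, zmul_I_l. reflexivity.
Qed.

Definition zU (j : Z) : zmat := ZM 1 (3*j) 0 1.
Lemma inH_U j : inH (zU j).
Proof.
  assert (U1 : inH (zU 1)).
  { replace (zU 1) with (zmul zZ zY) by reflexivity. apply inH_mul; [apply inH_Z|apply inH_Y]. }
  assert (Um : inH (zU (-1))).
  { replace (zU (-1)) with (zmul zY zZ) by reflexivity. apply inH_mul; [apply inH_Y|apply inH_Z]. }
  induction j using Z.peano_ind.
  - replace (zU 0) with zI by reflexivity. apply inH_I.
  - replace (zU (Z.succ j)) with (zmul (zU j) (zU 1)).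
    + apply inH_mul; auto.
    + unfold zmul, zU; cbn [za zb zc zd]; f_equal; lia.
  - replace (zU (Z.pred j)) with (zmul (zU j) (zU (-1))).
    + apply inH_mul; auto.
    + unfold zmul, zU; cbn [za zb zc zd]; f_equal; lia.
Qed.

Definition zR : zmat := zmul zX zY.
Definition znegI : zmat := ZM (-1) 0 0 (-1).
Lemma inH_negI : inH znegI.
Proof.
  replace znegI with (zmul zR (zmul zR zR)) by reflexivity.
  assert (inH zR) by (apply inH_mul; [apply inH_X|apply inH_Y]).
  apply inH_mul; auto. apply inH_mul; auto.
Qed.

Lemma base1 b d k : (d = 1 \/ d = -1)%Z -> (1 + b = d + 3*k)%Z -> inH (ZM 1 b 0 d).
Proof.
  intros [-> | ->] H.
  - replace (ZM 1 b 0 1) with (zU k) by (unfold zU; f_equal; lia). apply inH_U.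
  - replace (ZM 1 b 0 (-1)) with (zmul (zU (- (k - 1) - 1)) zZ).
    + apply inH_mul; [apply inH_U|apply inH_Z].
    + unfold zmul, zU, zZ; cbn [za zb zc zd]; f_equal; lia.
Qed.

Lemma base_case M : Gm M -> zc M = 0%Z -> inH M.
Proof.
  destruct M as [a b c d]; unfold Gm, zdet; cbn [za zb zc zd].
  intros [Hd (e & k & l & He & H1 & H2)] Hc. subst c.
  assert (Hd' : (a * d = 1 \/ (-a) * d = 1)%Z) by (destruct Hd; [left|right]; lia).
  assert (Hd'' : (d * a = 1 \/ d * (-a) = 1)%Z) by (destruct Hd; [left|right]; lia).
  assert (Ha : (a = 1 \/ a = -1)%Z)
    by (destruct Hd' as [Hx|Hx]; apply Z.mul_eq_1 in Hx; lia).
  assert (Hdd : (d = 1 \/ d = -1)%Z)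
    by (destruct Hd'' as [Hx|Hx]; apply Z.mul_eq_1 in Hx; lia).
  assert (d = e)%Z by (destruct Hdd, He; lia). subst d.
  destruct Ha as [-> | ->].
  - eapply base1; eauto.
  - replace (ZM (-1) b 0 e) with (zmul znegI (ZM 1 (-b) 0 (-e))).
    + apply inH_mul; [apply inH_negI|]. apply (base1 _ _ (-k)); [destruct He; lia| lia].
    + unfold zmul, znegI; cbn [za zb zc zd]; f_equal; lia.
Qed.

Definition mu (M : zmat) : Z := (Z.abs (za M) + Z.abs (zc M))%Z.

Lemma Gm_X : Gm zX.
Proof. split. { right; reflexivity. } exists 1%Z, 0%Z, 0%Z. cbn; lia. Qed.
Lemma Gm_Y : Gm zY.
Proof. split. { right; reflexivity. } exists (-1)%Z, 1%Z, 0%Z. cbn; lia. Qed.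
Lemma Gm_Z : Gm zZ.
Proof. split. { right; reflexivity. } exists (-1)%Z, 0%Z, 0%Z. cbn; lia. Qed.

Lemma step M : Gm M -> za M <> 0%Z -> zc M <> 0%Z ->
  exists h hi, inH hi /\ zmul hi h = zI /\ Gm h /\ (mu (zmul h M) < mu M)%Z.
Proof.
  intros HG Ha Hc. destruct M as [a b c d]. cbn [za zb zc zd] in *. unfold mu, zmul; cbn [za zb zc zd].
  assert (Hac : a <> c).
  { intro; subst c. destruct HG as [Hd (e & k & l & He & H1 & H2)]. unfold zdet in Hd; cbn [za zb zc zd] in *.
    assert (b = e + 3*k - a)%Z by lia. subst b. assert (d = e + 3*l - a)%Z by lia. subst d.
    assert ((a * (e + 3 * l - a) - (e + 3 * k - a) * a) = 3 * (a * (l - k)))%Z by ring. lia. }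
  assert (Sg : (((0 < a /\ 0 < c) \/ (a < 0 /\ c < 0)) \/ ((0 < a /\ c < 0) \/ (a < 0 /\ 0 < c)))%Z) by lia.
  destruct Sg as [Same|Opp].
  - destruct (Z_lt_le_dec (Z.abs c) (Z.abs a)) as [Hlt|Hle].
    + destruct (Z_le_gt_dec (3 * Z.abs c) (Z.abs a)) as [H3|H3].
      * exists (zmul zY zZ), (zmul zZ zY). split; [|split; [|split]].
        -- apply inH_mul; [apply inH_Z|apply inH_Y].
        -- reflexivity.
        -- apply Gm_mul; [apply Gm_Y|apply Gm_Z].
        -- cbn [zmul za zb zc zd zX zY zZ]. lia.
      * exists zZ, zZ. split; [|split; [|split]].
        -- apply inH_Z.
        -- reflexivity.
        -- apply Gm_Z.
        -- cbn [zmul za zb zc zd zX zY zZ]. lia.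
    + assert (Z.abs a < Z.abs c)%Z by lia.
      destruct (Z_le_gt_dec (3 * Z.abs a) (Z.abs c)) as [H3|H3].
      * exists (zmul zX (zmul (zmul zY zZ) zX)), (zmul zX (zmul (zmul zZ zY) zX)). split; [|split; [|split]].
        -- repeat apply inH_mul; auto using inH_X, inH_Y, inH_Z.
        -- reflexivity.
        -- repeat apply Gm_mul; auto using Gm_X, Gm_Y, Gm_Z.
        -- cbn [zmul za zb zc zd zX zY zZ]. lia.
      * exists (zmul zX (zmul zZ zX)), (zmul zX (zmul zZ zX)). split; [|split; [|split]].
        -- repeat apply inH_mul; auto using inH_X, inH_Y, inH_Z.
        -- reflexivity.
        -- repeat apply Gm_mul; auto using Gm_X, Gm_Y, Gm_Z.
        -- cbn [zmul za zb zc zd zX zY zZ]. lia.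
  - destruct (Z_le_gt_dec (Z.abs c) (Z.abs a)) as [Hle|Hlt].
    + exists zY, zY. split; [|split; [|split]].
      -- apply inH_Y.
      -- reflexivity.
      -- apply Gm_Y.
      -- cbn [zmul za zb zc zd zX zY zZ]. lia.
    + exists (zmul zX (zmul zY zX)), (zmul zX (zmul zY zX)). split; [|split; [|split]].
      -- repeat apply inH_mul; auto using inH_X, inH_Y, inH_Z.
      -- reflexivity.
      -- repeat apply Gm_mul; auto using Gm_X, Gm_Y, Gm_Z.
      -- cbn [zmul za zb zc zd zX zY zZ]. lia.
Qed.

Lemma reduce_n (n : nat) : forall M, Gm M -> (mu M <= Z.of_nat n)%Z -> inH M.
Proof.
  induction n as [|n IH]; intros M HG Hmu.
  - exfalso. destruct M as [a b c d]. unfold mu in Hmu; cbn [za zc] in Hmu.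
    assert (a = 0 /\ c = 0)%Z as [-> ->] by lia.
    destruct HG as [Hd _]. unfold zdet in Hd; cbn [za zb zc zd] in Hd. lia.
  - destruct (Z.eq_dec (zc M) 0) as [Hc|Hc]; [apply base_case; auto|].
    destruct (Z.eq_dec (za M) 0) as [Ha|Ha].
    + apply (step_by zX zX); [apply inH_X|reflexivity|].
      apply base_case. { apply Gm_mul; auto using Gm_X. }
      destruct M; cbn [zmul za zb zc zd zX] in *; lia.
    + destruct (step M HG Ha Hc) as (h & hi & Hhi & Hinv & Gh & Hlt).
      apply (step_by h hi); auto. apply IH.
      * apply Gm_mul; auto.
      * lia.
Qed.

Lemma reduce M : Gm M -> inH M.
Proof.
  intros HG. apply (reduce_n (Z.to_nat (mu M))); auto.
  unfold mu. lia.
Qed.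

Definition KA (A : mat2) : R := Rabs (m11 A) + Rabs (m12 A) + Rabs (m21 A) + Rabs (m22 A).
Lemma KA_pos A : 0 <= KA A.
Proof. unfold KA. pose proof (Rabs_pos (m11 A)); pose proof (Rabs_pos (m12 A));
  pose proof (Rabs_pos (m21 A)); pose proof (Rabs_pos (m22 A)). lra. Qed.

Lemma abs_lin p q u1 u2 : Rabs (p * u1 + q * u2) <= (Rabs p + Rabs q) * (Rabs u1 + Rabs u2).
Proof.
  eapply Rle_trans. apply Rabs_triang. rewrite !Rabs_mult.
  pose proof (Rabs_pos p); pose proof (Rabs_pos q); pose proof (Rabs_pos u1); pose proof (Rabs_pos u2).
  nra.
Qed.

Lemma lin_pnorm A y x : pnorm (psub (mat_apply A y) (mat_apply A x)) <= 2 * KA A * pnorm (psub y x).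
Proof.
  set (u1 := fst y - fst x). set (u2 := snd y - snd x).
  assert (Hu1 : Rabs u1 <= pnorm (psub y x)) by apply (abs_fst_le (psub y x)).
  assert (Hu2 : Rabs u2 <= pnorm (psub y x)) by apply (abs_snd_le (psub y x)).
  eapply Rle_trans. apply pnorm_le_sum.
  replace (fst (psub (mat_apply A y) (mat_apply A x))) with (m11 A * u1 + m12 A * u2)
    by (unfold u1, u2, psub, mat_apply; cbn [fst snd]; ring).
  replace (snd (psub (mat_apply A y) (mat_apply A x))) with (m21 A * u1 + m22 A * u2)
    by (unfold u1, u2, psub, mat_apply; cbn [fst snd]; ring).
  pose proof (abs_lin (m11 A) (m12 A) u1 u2). pose proof (abs_lin (m21 A) (m22 A) u1 u2).
  unfold KA. pose proof (Rabs_pos (m11 A)); pose proof (Rabs_pos (m12 A));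
  pose proof (Rabs_pos (m21 A)); pose proof (Rabs_pos (m22 A)). nra.
Qed.

Lemma lat0 : in_lattice (0, 0).
Proof. apply lat_iff; split; exists 0%Z; unfold cs, ct; cbn [fst snd]; simpl; field. Qed.

Lemma lin_cont A : quot_continuous (mat_apply A).
Proof.
  intros x e He. exists (e / (2 * KA A + 1)). pose proof (KA_pos A). split.
  { apply Rdiv_lt_0_compat; lra. }
  intros y Hy. exists (0, 0). split; [apply lat0|].
  rewrite (pnorm_ext _ (psub (mat_apply A y) (mat_apply A x))) by (unfold psub; cbn [fst snd]; ring).
  eapply Rle_lt_trans. apply lin_pnorm.
  pose proof (pnorm_pos (psub y x)).
  assert (pnorm (psub y x) * (2 * KA A + 1) < e).
  { apply (Rmult_lt_compat_r (2 * KA A + 1)) in Hy; [|lra].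
    unfold Rdiv in Hy. rewrite Rmult_assoc, Rinv_l in Hy by lra. lra. }
  nra.
Qed.

Lemma seg1d (phi : R -> pt) a b : a <= b ->
  (forall t, a <= t <= b -> exists d, 0 < d /\
      forall s, a <= s <= b -> Rabs (s - t) < d -> equiv (phi s) (phi t)) ->
  equiv (phi a) (phi b).
Proof.
  intros Hab HL.
  set (E := fun t => a <= t <= b /\ forall s, a <= s <= t -> equiv (phi s) (phi a)).
  assert (Eb : bound E) by (exists b; intros t [Ht _]; lra).
  assert (Ea : exists x, E x).
  { exists a; split; [lra|]. intros s Hs. replace s with a by lra. apply equiv_refl. }
  destruct (completeness E Eb Ea) as [sg [Hub Hlub]].
  assert (aE : E a).
  { split; [lra|]. intros s Hs. replace s with a by lra. apply equiv_refl. }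
  assert (asg : a <= sg) by (apply Hub; auto).
  assert (sgb : sg <= b) by (apply Hlub; intros t [Ht _]; lra).
  destruct (HL sg (conj asg sgb)) as (d & Hd & Hloc).
  assert (Ht : exists t, E t /\ sg - d < t).
  { apply NNPP; intro Hn.
    assert (is_upper_bound E (sg - d)).
    { intros t Et. destruct (Rle_dec t (sg - d)) as [|Hnt]; auto.
      exfalso; apply Hn; exists t; split; auto; lra. }
    specialize (Hlub _ H); lra. }
  destruct Ht as (t & Et & Htsg).
  assert (tsg : t <= sg) by (apply Hub; auto).
  destruct Et as [[Hat Htb] Et'].
  assert (Hsg : equiv (phi sg) (phi a)).
  { apply equiv_trans with (phi t).
    - apply equiv_sym. apply Hloc; [lra|]. apply Rabs_def1; lra.
    - apply Et'; lra. }
  set (r := Rmin b (sg + d / 2)).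
  assert (Hr1 : r <= b) by apply Rmin_l.
  assert (Hr2 : r <= sg + d/2) by apply Rmin_r.
  assert (Hr3 : a <= r) by (unfold r; apply Rmin_glb; lra).
  assert (Er : E r).
  { split; [lra|]. intros s Hs. destruct (Rle_dec s t) as [Hst|Hst].
    - apply Et'; lra.
    - apply equiv_trans with (phi sg); auto. apply Hloc; [lra|]. apply Rabs_def1; lra. }
  assert (r <= sg) by (apply Hub; auto).
  assert (Hbr : r = b).
  { unfold r in *. destruct (Rle_dec b (sg + d/2)).
    - apply Rmin_left; auto.
    - rewrite Rmin_right in H by lra. lra. }
  apply equiv_sym. destruct Er as [_ Er]. apply Er. lra.
Qed.

Definition seg (x u : pt) (t : R) : pt := (fst x + t * fst u, snd x + t * snd u).

Lemma seg_dist x u s t :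
  pnorm (psub (seg x u s) (seg x u t)) <= Rabs (s - t) * (Rabs (fst u) + Rabs (snd u)).
Proof.
  eapply Rle_trans. apply pnorm_le_sum.
  replace (fst (psub (seg x u s) (seg x u t))) with ((s - t) * fst u) by (unfold psub, seg; cbn [fst snd]; ring).
  replace (snd (psub (seg x u s) (seg x u t))) with ((s - t) * snd u) by (unfold psub, seg; cbn [fst snd]; ring).
  rewrite !Rabs_mult. lra.
Qed.

Lemma seg_dist0 x u t : pnorm (psub (seg x u t) x) = Rabs t * pnorm u.
Proof.
  rewrite (pnorm_ext _ (t * fst u, t * snd u)) by (unfold psub, seg; cbn [fst snd]; ring).
  rewrite pnorm_scale. destruct u; reflexivity.
Qed.

Lemma seg_0 x u : seg x u 0 = x.
Proof. destruct x; unfold seg; cbn [fst snd]; f_equal; ring. Qed.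
Lemma seg_1 x w : seg x (psub w x) 1 = w.
Proof. destruct x, w; unfold seg, psub; cbn [fst snd]; f_equal; ring. Qed.

Lemma nearc_equiv_l p p' q e : nearc p q e -> equiv p p' -> nearc p' q e.
Proof.
  intros (m & n & H1 & H2) He. apply equiv_iff in He. destruct He as [[i Hi] [j Hj]].
  exists (m - i)%Z, (n - j)%Z. rewrite !minus_IZR. split.
  - replace (cs p' - cs q - (IZR m - IZR i)) with (cs p - cs q - IZR m) by lra. auto.
  - replace (ct p' - ct q - (IZR n - IZR j)) with (ct p - ct q - IZR n) by lra. auto.
Qed.

Lemma marked_sep x w : is_marked x -> is_marked w -> pnorm (psub w x) < 1/2 -> w = x.
Proof.
  intros Hx Hw Hn. apply marked_iff in Hx, Hw.
  destruct Hx as (m1 & n1 & Hm1 & Hn1 & _). destruct Hw as (m2 & n2 & Hm2 & Hn2 & _).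
  pose proof (sq_norm_coords (psub w x)) as Hsq. rewrite cs_sub, ct_sub in Hsq.
  assert (Hs : cs w - cs x = IZR (m2 - m1) / 3) by (rewrite minus_IZR; lra).
  assert (Ht : ct w - ct x = IZR (n2 - n1) / 3) by (rewrite minus_IZR; lra).
  rewrite Hs, Ht in Hsq. set (m := (m2 - m1)%Z) in *. set (n := (n2 - n1)%Z) in *.
  pose proof (pnorm_sq (psub w x)). pose proof (pnorm_pos (psub w x)).
  assert (HQ : IZR (m * m + m * n + n * n) < 1).
  { rewrite !plus_IZR, !mult_IZR. nra. }
  apply lt_IZR in HQ.
  assert (m = 0 /\ n = 0)%Z as [Hm0 Hn0] by nia.
  apply coords_inj.
  - assert (cs w - cs x = 0) by (rewrite Hs, Hm0; simpl; lra). lra.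
  - assert (ct w - ct x = 0) by (rewrite Ht, Hn0; simpl; lra). lra.
Qed.

Definition gF (F : pt -> pt) (A : mat2) (y : pt) : pt := psub (F y) (mat_apply A y).
Definition Loc F A x := exists d, 0 < d /\
  forall y, pnorm (psub y x) < d -> equiv (gF F A y) (gF F A x).

Lemma pnorm_self x : pnorm (psub x x) = 0.
Proof. unfold pnorm, psub; cbn [fst snd]. replace ((fst x - fst x) ^ 2 + (snd x - snd x) ^ 2) with 0 by ring. apply sqrt_0. Qed.

Lemma Loc_nonmarked F A x : locally_affine_off_marked F A -> ~ is_marked x -> Loc F A x.
Proof.
  intros H Hx. destruct (H x Hx) as (d & c & Hd & Hc). exists d. split; auto. intros y Hy.
  pose proof (Hc y Hy) as H1. assert (H2 : equiv (F x) (padd (mat_apply A x) c)) by (apply Hc; rewrite pnorm_self; auto).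
  apply equiv_iff in H1, H2. apply equiv_iff. unfold gF. rewrite !cs_sub, !ct_sub.
  rewrite !cs_add in H1, H2. rewrite !ct_add in H1, H2. destruct H1 as [H1 H1'], H2 as [H2 H2']. split.
  - eapply isZ_ext; [|apply isZ_sub; [exact H1|exact H2]]. ring.
  - eapply isZ_ext; [|apply isZ_sub; [exact H1'|exact H2']]. ring.
Qed.

Lemma g_cont F A : quot_continuous F -> forall x e, 0 < e -> exists d, 0 < d /\
  forall y, pnorm (psub y x) < d -> nearc (gF F A y) (gF F A x) e.
Proof.
  intros HF x e He. destruct (HF x (e/2)) as (d1 & Hd1 & H1); [lra|].
  pose proof (KA_pos A).
  set (d2 := e / (2 * (2 * KA A + 1))).
  assert (Hd2 : 0 < d2) by (unfold d2; apply Rdiv_lt_0_compat; lra).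
  exists (Rmin d1 d2). split; [apply Rmin_pos; auto|]. intros y Hy.
  assert (Hy1 : pnorm (psub y x) < d1) by (eapply Rlt_le_trans; [exact Hy| apply Rmin_l]).
  assert (Hy2 : pnorm (psub y x) < d2) by (eapply Rlt_le_trans; [exact Hy| apply Rmin_r]).
  destruct (near_nearc _ _ _ (H1 y Hy1)) as (m & n & Hm & Hn).
  pose proof (lin_pnorm A y x) as HL. pose proof (pnorm_pos (psub y x)).
  assert (HL2 : pnorm (psub (mat_apply A y) (mat_apply A x)) < e/2).
  { assert (pnorm (psub y x) * (2 * (2 * KA A + 1)) < e).
    { apply (Rmult_lt_compat_r (2 * (2 * KA A + 1))) in Hy2; [|lra].
      unfold d2, Rdiv in Hy2. rewrite Rmult_assoc, Rinv_l in Hy2 by lra. lra. }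
    nra. }
  pose proof (cs_le (psub (mat_apply A y) (mat_apply A x))) as Hc.
  pose proof (ct_le (psub (mat_apply A y) (mat_apply A x))) as Ht.
  rewrite cs_sub in Hc. rewrite ct_sub in Ht.
  exists m, n. unfold gF. rewrite !cs_sub, !ct_sub. split.
  - replace (cs (F y) - cs (mat_apply A y) - (cs (F x) - cs (mat_apply A x)) - IZR m)
      with ((cs (F y) - cs (F x) - IZR m) - (cs (mat_apply A y) - cs (mat_apply A x))) by ring.
    pose proof (abs_diff_lt _ _ _ _ Hm (Rle_lt_trans _ _ _ Hc HL2)). lra.
  - replace (ct (F y) - ct (mat_apply A y) - (ct (F x) - ct (mat_apply A x)) - IZR n)
      with ((ct (F y) - ct (F x) - IZR n) - (ct (mat_apply A y) - ct (mat_apply A x))) by ring.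
    pose proof (abs_diff_lt _ _ _ _ Hn (Rle_lt_trans _ _ _ Ht HL2)). lra.
Qed.

Lemma path_const F A x u a b : a <= b -> (forall t, a <= t <= b -> Loc F A (seg x u t)) ->
  equiv (gF F A (seg x u a)) (gF F A (seg x u b)).
Proof.
  intros Hab HL. apply (seg1d (fun t => gF F A (seg x u t))); auto.
  intros t Ht. destruct (HL t Ht) as (d & Hd & Hloc).
  set (D := Rabs (fst u) + Rabs (snd u)).
  assert (HD : 0 <= D) by (unfold D; pose proof (Rabs_pos (fst u)); pose proof (Rabs_pos (snd u)); lra).
  exists (d / (D + 1)). split; [apply Rdiv_lt_0_compat; lra|].
  intros s Hs Hst. apply Hloc.
  eapply Rle_lt_trans. apply seg_dist. fold D.
  pose proof (Rabs_pos (s - t)).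
  assert (Rabs (s - t) * (D + 1) < d).
  { apply (Rmult_lt_compat_r (D + 1)) in Hst; [|lra].
    unfold Rdiv in Hst. rewrite Rmult_assoc, Rinv_l in Hst by lra. lra. }
  nra.
Qed.

Lemma Loc_marked F A x : is_affine_aut F A -> is_marked x -> Loc F A x.
Proof.
  intros HA Hx. destruct HA as [[_ [HFc _]] [_ [_ Hloc]]].
  exists (1/2). split; [lra|]. intros w Hw.
  destruct (classic (w = x)) as [->|Hwx]; [apply equiv_refl|].
  set (u := psub w x).
  assert (Hu : pnorm u > 0).
  { destruct (Rle_lt_or_eq_dec 0 (pnorm u) (pnorm_pos u)) as [|Hu0]; [lra|].
    exfalso. apply Hwx. pose proof (pnorm_sq u). rewrite <- Hu0 in H.
    assert (fst u = 0 /\ snd u = 0) as [H1 H2] by nra.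
    destruct w, x; unfold u, psub in H1, H2; cbn [fst snd] in *. f_equal; lra. }
  (* points of the segment other than x are unmarked *)
  assert (HL : forall t, 0 < t <= 1 -> Loc F A (seg x u t)).
  { intros t Ht. apply Loc_nonmarked; auto. intro Hm.
    assert (seg x u t = x).
    { apply marked_sep; auto. rewrite seg_dist0. rewrite Rabs_pos_eq by lra.
      fold u in Hw. nra. }
    assert (Hz : pnorm (psub (seg x u t) x) = 0) by (rewrite H; apply pnorm_self).
    rewrite seg_dist0 in Hz. rewrite Rabs_pos_eq in Hz by lra. nra. }
  apply nearc_lim. intros e He.
  destruct (g_cont F A HFc x e He) as (d1 & Hd1 & Hc).
  set (t0 := Rmin 1 (d1 / (2 * (pnorm u + 1)))).
  assert (Ht0 : 0 < t0) by (unfold t0; apply Rmin_pos; [lra|apply Rdiv_lt_0_compat; lra]).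
  assert (Ht1 : t0 <= 1) by apply Rmin_l.
  assert (Ht2 : t0 <= d1 / (2 * (pnorm u + 1))) by apply Rmin_r.
  assert (Hn : pnorm (psub (seg x u t0) x) < d1).
  { rewrite seg_dist0, Rabs_pos_eq by lra.
    assert (t0 * (2 * (pnorm u + 1)) <= d1).
    { apply (Rmult_le_compat_r (2 * (pnorm u + 1))) in Ht2; [|lra].
      unfold Rdiv in Ht2. rewrite Rmult_assoc, Rinv_l in Ht2 by lra. lra. }
    nra. }
  apply (nearc_equiv_l (gF F A (seg x u t0))); [apply Hc; auto|].
  rewrite <- (seg_1 x w). fold u. apply path_const; auto.
  intros t Ht. apply HL. lra.
Qed.

Lemma Loc_all F A x : is_affine_aut F A -> Loc F A x.
Proof.
  intros HA. destruct (classic (is_marked x)) as [Hm|Hm].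
  - apply Loc_marked; auto.
  - apply Loc_nonmarked; auto. apply HA.
Qed.

Lemma affine_global F A : is_affine_aut F A ->
  forall y, equiv (F y) (padd (mat_apply A y) (gF F A (0, 0))).
Proof.
  intros HA y.
  assert (H : equiv (gF F A (seg (0,0) (psub y (0,0)) 0)) (gF F A (seg (0,0) (psub y (0,0)) 1))).
  { apply path_const; [lra|]. intros; apply Loc_all; auto. }
  rewrite seg_0, seg_1 in H. apply equiv_sym in H.
  apply equiv_iff in H. apply equiv_iff. unfold gF in *. rewrite cs_add, ct_add.
  rewrite !cs_sub, !ct_sub in H. rewrite !cs_sub, !ct_sub. destruct H as [H1 H2]. split.
  - refine (isZ_ext _ _ _ H1); ring.
  - refine (isZ_ext _ _ _ H2); ring.
Qed.

Lemma A0 A : mat_apply A (0, 0) = (0, 0).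
Proof. unfold mat_apply; cbn [fst snd]; f_equal; ring. Qed.
Lemma cs00 : cs (0, 0) = 0.
Proof. unfold cs; cbn [fst snd]; field. Qed.
Lemma ct00 : ct (0, 0) = 0.
Proof. unfold ct; cbn [fst snd]; field. Qed.

Lemma lat_equiv0 l : in_lattice l <-> equiv l (0, 0).
Proof. rewrite equiv_iff, lat_iff, cs00, ct00, !Rminus_0_r. tauto. Qed.

Lemma equiv_padd_lat v t : in_lattice t -> equiv (padd v t) v.
Proof.
  intros Ht. apply lat_iff in Ht. destruct Ht as [H1 H2]. apply equiv_iff. rewrite cs_add, ct_add.
  split; [refine (isZ_ext _ _ _ H1)|refine (isZ_ext _ _ _ H2)]; ring.
Qed.

Lemma lat_glue2 : in_lattice glue2.
Proof. exists 0%Z, 1%Z, 0%Z. unfold padd, pscale, glue1, glue2, glue3; cbn [fst snd]. f_equal; simpl; ring. Qed.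
Lemma lat_glue3 : in_lattice glue3.
Proof. exists 0%Z, 0%Z, 1%Z. unfold padd, pscale, glue1, glue2, glue3; cbn [fst snd]. f_equal; simpl; ring. Qed.

Lemma mat_int B : in_lattice (mat_apply B glue2) -> in_lattice (mat_apply B glue3) ->
  exists N, B = toR N.
Proof.
  intros H2 H3. apply lat_iff in H2, H3. destruct H2 as [[a Ha] [c Hc]], H3 as [[b Hb] [d Hd]].
  exists (ZM a b c d). rewrite (mat_basis B) at 1. rewrite Ha, Hb, Hc, Hd. reflexivity.
Qed.

Lemma equiv_lin A x y : (forall l, in_lattice l -> in_lattice (mat_apply A l)) ->
  equiv x y -> equiv (mat_apply A x) (mat_apply A y).
Proof.
  intros HA He. unfold equiv in *.
  replace (psub (mat_apply A x) (mat_apply A y)) with (mat_apply A (psub x y)); auto.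
  unfold mat_apply, psub; cbn [fst snd]; f_equal; ring.
Qed.

Definition Gam (A : mat2) : Prop := exists M, A = toR M /\ Gm M.

Lemma p_marked : is_marked (1, 0).
Proof. exists (1, 0). split; [simpl; tauto|apply equiv_refl]. Qed.
Lemma mp_marked : is_marked (-1, 0).
Proof. exists (-1, 0). split; [simpl; tauto|apply equiv_refl]. Qed.
Lemma zero_unmarked : ~ is_marked (0, 0).
Proof.
  intro H. apply marked_iff in H. destruct H as (m & n & Hm & _ & _ & Hm3).
  rewrite cs00 in Hm. replace (3 * 0) with (IZR 0) in Hm by (simpl; ring).
  apply eq_IZR in Hm. subst m. apply Hm3. reflexivity.
Qed.

Lemma IZR_eq_int (z w : Z) (r : R) : IZR z = r -> IZR w = r -> z = w.
Proof. intros H1 H2. apply eq_IZR. congruence. Qed.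

Lemma sigma_cond M t :
  is_marked (padd (mat_apply (toR M) (1, 0)) t) ->
  is_marked (padd (mat_apply (toR M) (-1, 0)) t) ->
  ~ is_marked t ->
  in_lattice t /\ exists e k l : Z, (e = 1 \/ e = -1)%Z /\
     (za M + zb M = e + 3*k)%Z /\ (zc M + zd M = e + 3*l)%Z.
Proof.
  destruct M as [a b c d].
  intros H1 H2 H3. rewrite marked_iff in H1, H2, H3.
  destruct H1 as (m1 & n1 & Hm1 & Hn1 & C1 & D1).
  destruct H2 as (m2 & n2 & Hm2 & Hn2 & C2 & D2).
  rewrite cs_add, cs_toR in Hm1, Hm2. rewrite ct_add, ct_toR in Hn1, Hn2.
  assert (Ep : cs (1, 0) = 1/3 /\ ct (1, 0) = 1/3) by (unfold cs, ct; cbn [fst snd]; split; field).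
  assert (Em : cs (-1, 0) = -1/3 /\ ct (-1, 0) = -1/3) by (unfold cs, ct; cbn [fst snd]; split; field).
  destruct Ep as [Ep1 Ep2], Em as [Em1 Em2].
  rewrite Ep1, Ep2 in Hm1, Hn1. rewrite Em1, Em2 in Hm2, Hn2. cbn [za zb zc zd] in *.
  set (u1 := (m1 - a - b)%Z). set (u2 := (n1 - c - d)%Z).
  assert (Hu1 : 3 * cs t = IZR u1) by (unfold u1; rewrite !minus_IZR; lra).
  assert (Hu2 : 3 * ct t = IZR u2) by (unfold u2; rewrite !minus_IZR; lra).
  assert (Em2' : m2 = (u1 - a - b)%Z).
  { apply eq_IZR. unfold u1. rewrite !minus_IZR. lra. }
  assert (En2' : n2 = (u2 - c - d)%Z).
  { apply eq_IZR. unfold u2. rewrite !minus_IZR. lra. }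
  assert (Hnm : ~ (((u1 - u2) mod 3 = 0)%Z /\ (u1 mod 3 <> 0)%Z)).
  { intros [X Y]. apply H3. exists u1, u2. auto. }
  assert (Eu1 : u1 = (m1 - a - b)%Z) by reflexivity.
  assert (Eu2 : u2 = (n1 - c - d)%Z) by reflexivity.
  clearbody u1 u2. subst m2 n2.
  assert (K1 : (u1 mod 3 = 0)%Z) by zmod3.
  assert (K2 : (u2 mod 3 = 0)%Z) by zmod3.
  assert (K3 : (((a + b) mod 3 = 1 /\ (c + d) mod 3 = 1) \/ ((a + b) mod 3 = 2 /\ (c + d) mod 3 = 2))%Z) by zmod3.
  split.
  - apply lat_iff. split.
    + exists (u1 / 3)%Z. assert (IZR u1 = 3 * IZR (u1 / 3)).
      { rewrite <- mult_IZR. f_equal. zmod3. }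
      lra.
    + exists (u2 / 3)%Z. assert (IZR u2 = 3 * IZR (u2 / 3)).
      { rewrite <- mult_IZR. f_equal. zmod3. }
      lra.
  - destruct K3 as [[X Y]|[X Y]].
    + exists 1%Z, ((a + b) / 3)%Z, ((c + d) / 3)%Z. split; [lia|]. split; zmod3.
    + exists (-1)%Z, ((a + b) / 3 + 1)%Z, ((c + d) / 3 + 1)%Z. split; [lia|]. split; zmod3.
Qed.

Lemma equiv_padd_cancel u v t : equiv (padd u t) (padd v t) -> equiv u v.
Proof.
  rewrite !equiv_iff, !cs_add, !ct_add. intros [H1 H2].
  split; [refine (isZ_ext _ _ _ H1)|refine (isZ_ext _ _ _ H2)]; ring.
Qed.

Lemma padd0 t : padd (0, 0) t = t.
Proof. destruct t; unfold padd; cbn [fst snd]; f_equal; ring. Qed.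

Lemma aff_struct F A : is_affine_aut F A -> Gam A /\ forall x, equiv (F x) (mat_apply A x).
Proof.
  intros HA. pose proof (affine_global F A HA) as Hg. set (t := gF F A (0,0)) in Hg. clearbody t.
  destruct HA as [[Hresp [_ (G & HGr & _ & HGF & _)]] [Hmark [Hdet _]]].
  assert (Hlat : forall l, in_lattice l -> in_lattice (mat_apply A l)).
  { intros l Hl. apply lat_equiv0 in Hl. pose proof (Hresp _ _ Hl) as H.
    pose proof (Hg l) as H1. pose proof (Hg (0,0)) as H2. rewrite A0 in H2.
    apply lat_equiv0. apply (equiv_padd_cancel _ _ t).
    apply equiv_trans with (F l); [apply equiv_sym; auto|].
    apply equiv_trans with (F (0,0)); auto. }
  destruct (mat_int A (Hlat _ lat_glue2) (Hlat _ lat_glue3)) as [M ->].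
  assert (Hp : is_marked (padd (mat_apply (toR M) (1, 0)) t)).
  { apply (marked_equiv (F (1,0))); [apply Hg|]. apply Hmark, p_marked. }
  assert (Hmp : is_marked (padd (mat_apply (toR M) (-1, 0)) t)).
  { apply (marked_equiv (F (-1,0))); [apply Hg|]. apply Hmark, mp_marked. }
  assert (Ht : ~ is_marked t).
  { intro Hm. apply zero_unmarked. apply Hmark. apply (marked_equiv t); auto.
    apply equiv_sym. pose proof (Hg (0,0)) as H0. rewrite A0, padd0 in H0. exact H0. }
  destruct (sigma_cond M t Hp Hmp Ht) as [Htl Hcond].
  assert (HFA : forall x, equiv (F x) (mat_apply (toR M) x)).
  { intros x. apply equiv_trans with (padd (mat_apply (toR M) x) t); auto. apply equiv_padd_lat; auto. }
  split; auto.
  set (A := toR M) in *.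
  set (D := mat_det A) in *.
  set (B := Mat2 (m22 A / D) (- m12 A / D) (- m21 A / D) (m11 A / D)).
  assert (HAB : forall v, mat_apply A (mat_apply B v) = v).
  { intros [x y]. unfold B, mat_apply, D, mat_det in *; cbn [fst snd m11 m12 m21 m22] in *. f_equal; field; auto. }
  assert (HdetAB : D * mat_det B = 1).
  { unfold B, D, mat_det in *; cbn [m11 m12 m21 m22]. field; auto. }
  assert (HGA : forall x, equiv (G (mat_apply A x)) x).
  { intros x. apply equiv_trans with (G (F x)); [apply HGr, equiv_sym, HFA|apply HGF]. }
  assert (HBlat : forall l, in_lattice l -> in_lattice (mat_apply B l)).
  { intros l Hl. apply lat_equiv0 in Hl. apply lat_equiv0.
    apply equiv_trans with (G l).
    { apply equiv_sym. rewrite <- (HAB l) at 1. apply HGA. }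
    apply equiv_trans with (G (0,0)); [apply HGr; auto|].
    pose proof (HGA (0,0)) as H0. rewrite A0 in H0. exact H0. }
  destruct (mat_int B (HBlat _ lat_glue2) (HBlat _ lat_glue3)) as [N HN].
  rewrite HN in HdetAB. unfold D, A in HdetAB. rewrite !det_toR, <- mult_IZR in HdetAB.
  change 1 with (IZR 1) in HdetAB. apply eq_IZR, Z.eq_mul_1 in HdetAB.
  exists M. split; [reflexivity|]. split; [|exact Hcond]. destruct HdetAB; [left|right]; lia.
Qed.

Lemma lat_toR M l : in_lattice l -> in_lattice (mat_apply (toR M) l).
Proof.
  rewrite !lat_iff, cs_toR, ct_toR. intros [H1 H2].
  split; apply isZ_add; apply isZ_mulZ; auto.
Qed.

Lemma mark_fwd M x : Gm M -> is_marked x -> is_marked (mat_apply (toR M) x).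
Proof.
  intros [_ (e & k & l & He & H1 & H2)] Hx. rewrite marked_iff in *.
  destruct Hx as (m & n & Hm & Hn & C & D).
  destruct M as [a b c d]; cbn [za zb zc zd] in *.
  exists (a * m + b * n)%Z, (c * m + d * n)%Z. split; [|split].
  - rewrite cs_toR; cbn [za zb zc zd]. rewrite plus_IZR, !mult_IZR, <- Hm, <- Hn. ring.
  - rewrite ct_toR; cbn [za zb zc zd]. rewrite plus_IZR, !mult_IZR, <- Hm, <- Hn. ring.
  - assert (Hj : (n = m + 3 * ((n - m) / 3))%Z) by zmod3.
    set (j := ((n - m) / 3)%Z) in *. clearbody j. subst n.
    assert (b = e + 3 * k - a)%Z by lia. subst b.
    assert (d = e + 3 * l - c)%Z by lia. subst d.
    set (P := (k * m + e * j + 3 * k * j - a * j)%Z).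
    set (Q := (l * m + e * j + 3 * l * j - c * j)%Z).
    assert (E1 : (a * m + (e + 3 * k - a) * (m + 3 * j) = e * m + 3 * P)%Z) by (unfold P; ring).
    assert (E2 : (c * m + (e + 3 * l - c) * (m + 3 * j) = e * m + 3 * Q)%Z) by (unfold Q; ring).
    rewrite E1, E2. clearbody P Q. destruct He as [-> | ->]; split; zmod3.
Qed.

Lemma toR_inv_apply M x : (zdet M = 1 \/ zdet M = -1)%Z ->
  mat_apply (toR (zinv M)) (mat_apply (toR M) x) = x.
Proof. intros H. rewrite <- mat_apply_mul, <- toR_mul, zinv_l, toR_I by auto. apply mat_apply_id. Qed.
Lemma toR_apply_inv M x : (zdet M = 1 \/ zdet M = -1)%Z ->
  mat_apply (toR M) (mat_apply (toR (zinv M)) x) = x.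
Proof. intros H. rewrite <- mat_apply_mul, <- toR_mul, zinv_r, toR_I by auto. apply mat_apply_id. Qed.

Lemma Gam_aff A : Gam A -> is_affine_aut (mat_apply A) A.
Proof.
  intros (M & -> & HG). pose proof HG as [Hd _].
  split; [|split; [|split]].
  - split; [intros x y; apply equiv_lin, lat_toR|split; [apply lin_cont|]].
    exists (mat_apply (toR (zinv M))). split; [intros x y; apply equiv_lin, lat_toR|].
    split; [apply lin_cont|]. split.
    + intros x. rewrite toR_inv_apply by auto. apply equiv_refl.
    + intros x. rewrite toR_apply_inv by auto. apply equiv_refl.
  - intros x. split; [|apply mark_fwd; auto].
    intros Hm. apply (mark_fwd (zinv M)) in Hm; [|apply Gm_inv; auto].
    rewrite toR_inv_apply in Hm; auto.
  - rewrite det_toR. destruct Hd as [-> | ->]; simpl; lra.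
  - intros x _. exists 1, (0, 0). split; [lra|]. intros y _.
    apply equiv_sym, equiv_padd_lat, lat0.
Qed.

Lemma Gam_gen A : Gam A -> mat_gen alpha beta gamma A.
Proof. intros (M & -> & HG). apply reduce; auto. Qed.

Lemma gen_Gam A : mat_gen alpha beta gamma A -> Gam A.
Proof.
  induction 1 as [| | | |A B _ [M [-> HM]] _ [N [-> HN]]|A B _ [M [-> HM]] H1 H2].
  - exists zX. split; [symmetry; apply toR_X|apply Gm_X].
  - exists zY. split; [symmetry; apply toR_Y|apply Gm_Y].
  - exists zZ. split; [symmetry; apply toR_Z|apply Gm_Z].
  - exists zI. split; [symmetry; apply toR_I|]. split; [left; reflexivity|].
    exists 1%Z, 0%Z, 0%Z. unfold zI; cbn [za zb zc zd]. lia.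
  - exists (zmul M N). split; [symmetry; apply toR_mul|apply Gm_mul; auto].
  - exists (zinv M). split; [|apply Gm_inv; auto].
    pose proof HM as [Hd _].
    rewrite <- (mat_id_r B). rewrite <- toR_I, <- (zinv_r M Hd), toR_mul.
    rewrite mat_assoc, H2, mat_id_l. reflexivity.
Qed.

Lemma exists_coords s t : exists x, cs x = s /\ ct x = t.
Proof.
  exists (3/2 * (s + t), s3/2 * (s - t)). unfold cs, ct; cbn [fst snd]. split; s3tac.
Qed.

Lemma intZ_zero z : (forall r, isZ (IZR z * r)) -> z = 0%Z.
Proof.
  intros H. destruct (Z.eq_dec z 0) as [|Hz]; auto. exfalso.
  assert (HZ : IZR z <> 0) by (apply not_0_IZR; auto).
  destruct (H (1 / (2 * IZR z))) as [m Hm].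
  replace (IZR z * (1 / (2 * IZR z))) with (1/2) in Hm by (field; auto).
  assert (IZR 1 = IZR (2 * m)) by (rewrite mult_IZR; simpl; lra).
  apply eq_IZR in H0. lia.
Qed.

Lemma toR_equiv_inj M N : (forall x, equiv (mat_apply (toR M) x) (mat_apply (toR N) x)) -> M = N.
Proof.
  intros H. destruct M as [a b c d], N as [a' b' c' d'].
  assert (K : forall s t, isZ (IZR (a - a') * s + IZR (b - b') * t) /\ isZ (IZR (c - c') * s + IZR (d - d') * t)).
  { intros s t. destruct (exists_coords s t) as (x & Hs & Ht).
    specialize (H x). apply equiv_iff in H. rewrite !cs_toR, !ct_toR, Hs, Ht in H.
    cbn [za zb zc zd] in H. rewrite !minus_IZR. destruct H as [H1 H2].
    split; [refine (isZ_ext _ _ _ H1)|refine (isZ_ext _ _ _ H2)]; ring. }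
  assert (a - a' = 0)%Z.
  { apply intZ_zero. intros r. destruct (K r 0) as [X _]. refine (isZ_ext _ _ _ X); ring. }
  assert (b - b' = 0)%Z.
  { apply intZ_zero. intros r. destruct (K 0 r) as [X _]. refine (isZ_ext _ _ _ X); ring. }
  assert (c - c' = 0)%Z.
  { apply intZ_zero. intros r. destruct (K r 0) as [_ X]. refine (isZ_ext _ _ _ X); ring. }
  assert (d - d' = 0)%Z.
  { apply intZ_zero. intros r. destruct (K 0 r) as [_ X]. refine (isZ_ext _ _ _ X); ring. }
  f_equal; lia.
Qed.

Lemma gen_aff A : mat_gen alpha beta gamma A ->
  aff_gen (mat_apply alpha) (mat_apply beta) (mat_apply gamma) (mat_apply A).
Proof.
  induction 1 as [| | | |A B _ IHA _ IHB|A B _ IHA H1 H2].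
  - apply ag_1.
  - apply ag_2.
  - apply ag_3.
  - apply (ag_eq _ _ _ (fun x => x)); [apply ag_id|]. intros x. rewrite mat_apply_id. apply equiv_refl.
  - apply (ag_eq _ _ _ (fun x => mat_apply A (mat_apply B x))); [apply ag_comp; auto|].
    intros x. rewrite mat_apply_mul. apply equiv_refl.
  - apply (ag_inv _ _ _ (mat_apply A)); auto.
    + intros x. rewrite <- mat_apply_mul, H2, mat_apply_id. apply equiv_refl.
    + intros x. rewrite <- mat_apply_mul, H1, mat_apply_id. apply equiv_refl.
Qed.

Theorem mainTheorem2 :
  (* the Veech map Psi |-> D Psi is well defined *)
  (forall F A B, is_affine_aut F A -> is_affine_aut F B -> A = B) /\
  (* the Veech homomorphism is injective *)
  (forall F1 F2 A, is_affine_aut F1 A -> is_affine_aut F2 A -> map_eq F1 F2) /\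
  (* Aff(S_E) is generated by Psi_alpha, Psi_beta, Psi_gamma *)
  (exists Fa Fb Fc,
      is_affine_aut Fa alpha /\ is_affine_aut Fb beta /\ is_affine_aut Fc gamma /\
      forall F A, is_affine_aut F A -> aff_gen Fa Fb Fc F) /\
  (* the Veech group V(S_E) is generated by alpha, beta, gamma *)
  (forall A, (exists F, is_affine_aut F A) <-> mat_gen alpha beta gamma A).
Proof.
  split; [|split; [|split]].
  - intros F A B HA HB.
    destruct (aff_struct F A HA) as [(M & -> & _) HFA].
    destruct (aff_struct F B HB) as [(N & -> & _) HFB].
    f_equal. apply toR_equiv_inj. intros x.
    apply equiv_trans with (F x); [apply equiv_sym|]; auto.
  - intros F1 F2 A H1 H2 x.
    destruct (aff_struct _ _ H1) as [_ E1]. destruct (aff_struct _ _ H2) as [_ E2].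
    apply equiv_trans with (mat_apply A x); auto. apply equiv_sym; auto.
  - exists (mat_apply alpha), (mat_apply beta), (mat_apply gamma).
    split; [|split; [|split]].
    + apply Gam_aff, gen_Gam, mg_1.
    + apply Gam_aff, gen_Gam, mg_2.
    + apply Gam_aff, gen_Gam, mg_3.
    + intros F A HA. destruct (aff_struct F A HA) as [HG HFA].
      apply (ag_eq _ _ _ (mat_apply A)).
      * apply gen_aff, Gam_gen; auto.
      * intros x. apply equiv_sym; auto.
  - intros A. split.
    + intros [F HF]. apply Gam_gen. apply (aff_struct F A HF).
    + intros HA. exists (mat_apply A). apply Gam_aff, gen_Gam; auto.
Qed.
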